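(* Let $T$ be a positive integer and let $\mathfrak{D}$ be a distribution over query–document pairs $(q,d)$. Suppose there is an unknown weight vector $w_*\in\mathbb{R}^T$, and that for each sampled pair $(q,d)$ one observes the feature vector $x_{(q,d)}$ together with the score $s_{(q,d)}=\langle w_*, x_{(q,d)}\rangle$. Let $$A=\mathbb{E}_{(q,d) \sim \mathfrak{D}} \left[ \tfrac{1}{\mathrm{len}(q)}\, x_{(q,d)}x_{(q,d)}^{\top} \right]\in\mathbb{R}^{T\times T},$$ and assume $\lambda_{\min}(A)>0$. Then there exist an absolute constant $C>0$ and an algorithm such that, for every $\delta\in(0,1)$, given $n \geq \frac{C}{\lambda_{\min}(A)} \log\left(\frac{T}{\delta}\right)$ pairs sampled i.i.d. from $\mathfrak{D}$ (with their observed feature vectors and scores), with probability at least $1-\delta$ the algorithm outputs exactly $w_*$.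
   Context: Tokens are elements of $[T]=\{1,\dots,T\}$. A query is a finite token sequence $q=(q_1,\dots,q_{\mathrm{len}(q)})$ and a document a finite token sequence $d=(d_1,\dots,d_{\mathrm{len}(d)})$. Fixed encoders assign unit vectors $E_q(q_i)\in\mathbb{R}^m$ to query token positions and $E_d(d_j)\in\mathbb{R}^m$ to document token positions. The feature vector $x_{(q,d)}\in\mathbb{R}^T$ has $t$-th coordinate equal to $\max_{j\in[\mathrm{len}(d)]} E_q(q_t)^\top E_d(d_j)$ if token $t$ occurs in $q$ (here $q_t$ denotes the occurrence of token $t$ in $q$), and $0$ otherwise. The paper models the Weighted Chamfer score with weights $w$ of the pair $(q,d)$ as the linear function $\langle w, x_{(q,d)}\rangle$; the observed scores are Weighted Chamfer scores with respect to the hidden weights $w_*$. $\lambda_{\min}$ denotes the smallest eigenvalue. *)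

(* Defs.v *)
From HB Require Import structures.
From mathcomp Require Import all_boot all_order all_algebra.
From mathcomp Require Import all_classical all_reals.
From mathcomp Require Import ereal esum exp.
Set Implicit Arguments. Unset Strict Implicit. Unset Printing Implicit Defensive.
Import Order.TTheory GRing.Theory Num.Theory.
Local Open Scope classical_set_scope.
Local Open Scope ring_scope.

Section Defs.
Variable R : realType.

(* tokens are elements of 'I_T (i.e. [T] shifted to 0..T-1); a query-document
   pair is a pair of token sequences *)
Definition qd_pair (T : nat) := (seq 'I_T * seq 'I_T)%type.

Definition dotv (m : nat) (u v : 'rV[R]_m) : R := \sum_(k < m) u 0 k * v 0 k.

Definition max_seq (s : seq R) : R := foldl Num.max (head 0 s) s.

(* Encoders (possibly contextual): Eq q i is the unit vector assigned to the
   i-th position of query q, Ed d j the one assigned to the j-th position of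
   document d. *)
Definition unit_encoder (T m : nat) (E : seq 'I_T -> nat -> 'rV[R]_m) : Prop :=
  forall (s : seq 'I_T) (i : nat), (i < size s)%N -> dotv (E s i) (E s i) = 1.

Definition feature (T m : nat) (Eq Ed : seq 'I_T -> nat -> 'rV[R]_m)
  (z : qd_pair T) : 'rV[R]_T :=
  \row_(t < T) (if t \in z.1 then
     max_seq [seq dotv (Eq z.1 (index t z.1)) (Ed z.2 j) | j <- iota 0 (size z.2)]
   else 0).

Definition wchamfer (T : nat) (w x : 'rV[R]_T) : R := \sum_(t < T) w 0 t * x 0 t.

Definition is_distribution (T : nat) (D : qd_pair T -> R) : Prop :=
  (forall z, 0 <= D z) /\ \esum_(z in [set: qd_pair T]) (D z)%:E = 1%E.

Definition expect (T : nat) (D : qd_pair T -> R) (f : qd_pair T -> R) : R :=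
  fine (\esum_(z in [set: qd_pair T]) (D z * Num.max (f z) 0)%:E)
  - fine (\esum_(z in [set: qd_pair T]) (D z * Num.max (- f z) 0)%:E).

Definition second_moment (T m : nat) (Eq Ed : seq 'I_T -> nat -> 'rV[R]_m)
  (D : qd_pair T -> R) : 'M[R]_T :=
  \matrix_(i < T, j < T) expect D (fun z =>
     (size z.1)%:R^-1 * (feature Eq Ed z 0 i * feature Eq Ed z 0 j)).

Definition lambda_min (T : nat) (A : 'M[R]_T) : R := inf [set a : R | eigenvalue A a].

Definition prob_iid (T n : nat) (D : qd_pair T -> R) (P : n.-tuple (qd_pair T) -> Prop)
  : \bar R :=
  \esum_(s in [set s : n.-tuple (qd_pair T) | P s]) (\prod_(i < n) D (tnth s i))%:E.

End Defs.

(* Main.v *)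
Require Import Defs.
From HB Require Import structures.
From mathcomp Require Import all_boot all_order all_algebra.
From mathcomp Require Import all_classical all_reals.
From mathcomp Require Import ereal esum exp.
From mathcomp Require Import all_analysis.
From mathcomp Require Import ring lra zify.
Import Order.TTheory GRing.Theory Num.Theory.
Local Open Scope classical_set_scope.
Local Open Scope ring_scope.
Section P1.
Context {R : realType}.
Implicit Types (m : nat).

Lemma dotvC {m} (u v : 'rV[R]_m) : dotv u v = dotv v u.
Proof. by apply: eq_bigr => k _; rewrite mulrC. Qed.

Lemma dotvDl {m} (u v w : 'rV[R]_m) : dotv (u + v) w = dotv u w + dotv v w.
Proof. by rewrite /dotv -big_split; apply: eq_bigr => k _; rewrite mxE mulrDl. Qed.

Lemma dotvZl {m} a (u w : 'rV[R]_m) : dotv (a *: u) w = a * dotv u w.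
Proof. by rewrite /dotv mulr_sumr; apply: eq_bigr => k _; rewrite mxE mulrA. Qed.

Lemma dotvNl {m} (u w : 'rV[R]_m) : dotv (- u) w = - dotv u w.
Proof. by rewrite -scaleN1r dotvZl mulN1r. Qed.

Lemma dotvBl {m} (u v w : 'rV[R]_m) : dotv (u - v) w = dotv u w - dotv v w.
Proof. by rewrite dotvDl dotvNl. Qed.

Lemma dotvDr {m} (u v w : 'rV[R]_m) : dotv w (u + v) = dotv w u + dotv w v.
Proof. by rewrite dotvC dotvDl !(dotvC w). Qed.

Lemma dotvZr {m} a (u w : 'rV[R]_m) : dotv w (a *: u) = a * dotv w u.
Proof. by rewrite dotvC dotvZl dotvC. Qed.

Lemma dotvBr {m} (u v w : 'rV[R]_m) : dotv w (u - v) = dotv w u - dotv w v.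
Proof. by rewrite dotvC dotvBl !(dotvC w). Qed.

Lemma dotv0l {m} (w : 'rV[R]_m) : dotv 0 w = 0.
Proof. by rewrite /dotv big1 // => k _; rewrite mxE mul0r. Qed.

Lemma dotv0r {m} (w : 'rV[R]_m) : dotv w 0 = 0.
Proof. by rewrite dotvC dotv0l. Qed.

Lemma dotv_ge0 {m} (u : 'rV[R]_m) : 0 <= dotv u u.
Proof. by apply: sumr_ge0 => k _; rewrite -expr2 sqr_ge0. Qed.

Lemma dotv_eq0 {m} (u : 'rV[R]_m) : dotv u u = 0 -> u = 0.
Proof.
move=> /eqP; rewrite psumr_eq0 => [/allP H|k _]; last by rewrite -expr2 sqr_ge0.
apply/rowP => k; rewrite mxE; have := H k (mem_index_enum _).
by rewrite -expr2 sqrf_eq0 => /eqP.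
Qed.

Lemma dotv_mx {m} (u v : 'rV[R]_m) : dotv u v = (u *m v^T) 0 0.
Proof. by rewrite mxE; apply: eq_bigr => k _; rewrite mxE. Qed.

Lemma dotv_unit_bound {m} (u v : 'rV[R]_m) :
  dotv u u = 1 -> dotv v v = 1 -> `|dotv u v| <= 1.
Proof.
move=> hu hv; have h1 := dotv_ge0 (u - v); have h2 := dotv_ge0 (u + v).
rewrite !dotvBl !dotvBr (dotvC v u) hu hv in h1.
rewrite !dotvDl !dotvDr (dotvC v u) hu hv in h2.
rewrite ler_norml; apply/andP; split; lra.
Qed.

Lemma foldl_max_bound (s : seq R) a :
  `|a| <= 1 -> all (fun x => `|x| <= 1) s -> `|foldl Num.max a s| <= 1.
Proof.
elim: s a => [//|x s IH] a ha /= /andP[hx hs]; apply: IH => //.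
by case: (leP a x).
Qed.

Lemma max_seq_bound (s : seq R) :
  all (fun x => `|x| <= 1) s -> `|max_seq s| <= 1.
Proof.
move=> hs; apply: foldl_max_bound => //.
by case: s hs => [|x s] /=; [rewrite normr0 | case/andP].
Qed.

Variables (T m : nat) (Eq Ed : seq 'I_T -> nat -> 'rV[R]_m).
Hypotheses (hEq : unit_encoder Eq) (hEd : unit_encoder Ed).

Lemma feature_bound z t : `|feature Eq Ed z 0 t| <= 1.
Proof.
rewrite mxE; case: ifP => ht; last by rewrite normr0.
apply: max_seq_bound; apply/allP => y /mapP [j]; rewrite mem_iota add0n => hj ->.
by apply: dotv_unit_bound; [apply: hEq; rewrite index_mem | apply: hEd].
Qed.

Lemma feature_sq z : uniq z.1 -> dotv (feature Eq Ed z) (feature Eq Ed z) <= (size z.1)%:R.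
Proof.
move=> hu; apply: (@le_trans _ _ (\sum_(t < T) (if t \in z.1 then 1 else 0))).
  apply: ler_sum => t _; have hb := feature_bound z t.
  rewrite mxE; case: ifP => ht /=; last by rewrite mulr0.
  move: hb; rewrite mxE ht ler_norml => /andP[h1 h2]; nra.
by rewrite -big_mkcond /= sumr_const (card_uniqP hu).
Qed.
End P1.
Section esumZ.
Context {R : realType}.
Local Open Scope ereal_scope.

Lemma esumZl (I : choiceType) (S : set I) (c : R) (a : I -> \bar R) :
  (0 <= c)%R -> (forall i, 0 <= a i) ->
  \esum_(i in S) (c%:E * a i) = c%:E * \esum_(i in S) a i.
Proof.
move=> c0 a0; rewrite /esum -ereal_supZl //; last first.
  by apply/set0P; exists 0; exists set0; [exact: fsets_set0 | rewrite fsbig_set0].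
congr ereal_sup; apply/seteqP; split => x /=.
  move=> [A hA <-]; exists (\sum_(i \in A) a i); first by exists A.
  by rewrite !fsbig_finite //; [rewrite ge0_sume_distrr | case: hA | case: hA].
move=> [y [A hA <-] <-]; exists A => //.
by rewrite !fsbig_finite //; [rewrite ge0_sume_distrr | case: hA | case: hA].
Qed.
End esumZ.

Section Expect.
Context {R : realType}.
Context {T : nat} {D : qd_pair T -> R}.
Hypothesis hD : is_distribution D.

Local Notation S := [set: qd_pair T].

Definition ES (h : qd_pair T -> R) : R := fine (\esum_(z in S) (D z * h z)%:E).

Definition bnd (h : qd_pair T -> R) := exists M, forall z, `|h z| <= M.

Lemma D_ge0 z : 0 <= D z. Proof. by case: hD. Qed.

Lemma esumD1 : (\esum_(z in S) (D z)%:E = 1)%E. Proof. by case: hD. Qed.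

Lemma esum_cst (c : R) : 0 <= c -> (\esum_(z in S) (D z * c)%:E = c%:E)%E.
Proof.
move=> c0; under eq_esum do rewrite mulrC EFinM.
by rewrite esumZl // ?esumD1 ?mule1 // => z; rewrite lee_fin D_ge0.
Qed.

Lemma esum_nonneg_le {h : qd_pair T -> R} {M} :
  (forall z, 0 <= h z <= M) -> (\esum_(z in S) (D z * h z)%:E <= M%:E)%E.
Proof.
move=> hh; have M0 : 0 <= M by case/andP: (hh (nil, nil)) => a b; apply: le_trans b.
rewrite -(esum_cst _ M0); apply: le_esum => z _; rewrite lee_fin.
by apply: ler_wpM2l; [exact: D_ge0 | case/andP: (hh z)].
Qed.

Lemma ESE {h : qd_pair T -> R} {M} : (forall z, 0 <= h z <= M) ->
  (ES h)%:E = \esum_(z in S) (D z * h z)%:E.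
Proof.
move=> hh; rewrite fineK // fin_numElt; apply/andP; split.
  apply: (@lt_le_trans _ _ 0%E); first exact: ltNy0.
  by apply: esum_ge0 => z _; rewrite lee_fin mulr_ge0 ?D_ge0 //; case/andP: (hh z).
apply: (@le_lt_trans _ _ M%:E); [exact: esum_nonneg_le hh | exact: ltry].
Qed.

Lemma ES_le {f g : qd_pair T -> R} {M} : (forall z, 0 <= f z <= g z) ->
  (forall z, g z <= M) -> ES f <= ES g.
Proof.
move=> hfg hg.
have hf' : forall z, 0 <= f z <= M.
  by move=> z; case/andP: (hfg z) => a b; rewrite a (le_trans b (hg z)).
have hg' : forall z, 0 <= g z <= M.
  by move=> z; case/andP: (hfg z) => a b; rewrite (le_trans a b) hg.
rewrite -lee_fin (ESE hf') (ESE hg'); apply: le_esum => z _; rewrite lee_fin.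
by apply: ler_wpM2l; [exact: D_ge0 | case/andP: (hfg z)].
Qed.

Lemma ES_ge0 {f : qd_pair T -> R} {M} : (forall z, 0 <= f z <= M) -> 0 <= ES f.
Proof.
move=> hf; rewrite -lee_fin (ESE hf); apply: esum_ge0 => z _.
by rewrite lee_fin mulr_ge0 ?D_ge0 //; case/andP: (hf z).
Qed.

Lemma ESD {f g : qd_pair T -> R} {M N} : (forall z, 0 <= f z <= M) ->
  (forall z, 0 <= g z <= N) -> ES (fun z => f z + g z) = ES f + ES g.
Proof.
move=> hf hg.
have hfg : forall z, 0 <= f z + g z <= M + N.
  move=> z; case/andP: (hf z) => a b; case/andP: (hg z) => c d.
  by rewrite addr_ge0 // lerD.
apply: EFin_inj; rewrite EFinD (ESE hf) (ESE hg) (ESE hfg) -esumD.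
- by apply: eq_esum => z _; rewrite mulrDr EFinD.
- by move=> z _; rewrite lee_fin mulr_ge0 ?D_ge0 //; case/andP: (hf z).
- by move=> z _; rewrite lee_fin mulr_ge0 ?D_ge0 //; case/andP: (hg z).
Qed.

Lemma ESZ {f : qd_pair T -> R} {M} c : 0 <= c -> (forall z, 0 <= f z <= M) ->
  ES (fun z => c * f z) = c * ES f.
Proof.
move=> c0 hf.
have hcf : forall z, 0 <= c * f z <= c * M.
  by move=> z; case/andP: (hf z) => a b; rewrite mulr_ge0 // ler_wpM2l.
apply: EFin_inj; rewrite EFinM (ESE hf) (ESE hcf) -esumZl //.
- by apply: eq_esum => z _; rewrite mulrCA EFinM.
- by move=> z; rewrite lee_fin mulr_ge0 ?D_ge0 //; case/andP: (hf z).
Qed.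

Lemma ES_cst c : 0 <= c -> ES (fun=> c) = c.
Proof. by move=> c0; rewrite /ES esum_cst. Qed.

Lemma expect_ES {h : qd_pair T -> R} {M} : (forall z, `|h z| <= M) ->
  expect D h = ES (fun z => h z + M) - M.
Proof.
move=> hh.
have hp : forall z, 0 <= Num.max (h z) 0 <= M.
  move=> z; have := hh z; rewrite ler_norml => /andP[a b].
  by case: (leP (h z) 0) => c; rewrite ?lexx ?(le_trans a) ?oppr_le0 //; lra.
have hn : forall z, 0 <= Num.max (- h z) 0 <= M.
  move=> z; have := hh z; rewrite ler_norml => /andP[a b].
  by case: (leP (- h z) 0) => c; lra.
have hM : forall z, 0 <= h z + M <= M + M.
  by move=> z; have := hh z; rewrite ler_norml => /andP[a b]; lra.
have M0 : 0 <= M by apply: le_trans (hh (nil, nil)).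
have hc : forall z : qd_pair T, 0 <= (fun=> M) z <= M by move=> z; rewrite M0 lexx.
have e1 := ESD hM hn.
have e2 := ESD hp hc.
have E : (fun z => h z + M + Num.max (- h z) 0) =
          (fun z => Num.max (h z) 0 + M).
  apply/funext => z; move: (h z) => y {e1 e2 hc hM hp hn hh}.
  by case: (leP (- y) 0) => a; case: (leP y 0) => b; lra.
rewrite E e2 ES_cst // in e1.
rewrite /expect -/(ES _) -/(ES _); clear E e2 hc hp hn hM hh; lra.
Qed.

Lemma expect_nonneg {h : qd_pair T -> R} {M} : (forall z, 0 <= h z <= M) ->
  expect D h = ES h.
Proof.
move=> hh; have M0 : 0 <= M by case/andP: (hh (nil, nil)) => a b; apply: le_trans b.
have hb : forall z, `|h z| <= M.
  by move=> z; case/andP: (hh z) => a b; rewrite ger0_norm.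
have hc : forall z : qd_pair T, 0 <= (fun=> M) z <= M by move=> z; rewrite M0 lexx.
by rewrite (expect_ES hb) (ESD hh hc) ES_cst // addrK.
Qed.

Lemma expectD {f g : qd_pair T -> R} {M N} : (forall z, `|f z| <= M) ->
  (forall z, `|g z| <= N) ->
  expect D (fun z => f z + g z) = expect D f + expect D g.
Proof.
move=> hf hg.
have hfg : forall z, `|f z + g z| <= M + N.
  by move=> z; apply: le_trans (ler_normD _ _) _; rewrite lerD.
have hf' : forall z, 0 <= f z + M <= M + M.
  by move=> z; have := hf z; rewrite ler_norml => /andP[a b]; lra.
have hg' : forall z, 0 <= g z + N <= N + N.
  by move=> z; have := hg z; rewrite ler_norml => /andP[a b]; lra.
rewrite (expect_ES hf) (expect_ES hg) (expect_ES hfg).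
have -> : (fun z => f z + g z + (M + N)) = (fun z => (f z + M) + (g z + N)).
  by apply/funext => z; rewrite addrACA.
rewrite (ESD hf' hg'); clear hf hg hfg hf' hg'; lra.
Qed.

Lemma expectN (f : qd_pair T -> R) : expect D (fun z => - f z) = - expect D f.
Proof.
rewrite /expect opprB; congr (_ - fine _); apply: eq_esum => z _.
by rewrite opprK.
Qed.

Lemma expectZ {f : qd_pair T -> R} {M} c : (forall z, `|f z| <= M) ->
  expect D (fun z => c * f z) = c * expect D f.
Proof.
move=> hf.
wlog c0 : c / 0 <= c => [W|].
  case: (leP 0 c) => [|c0]; first exact: W.
  have -> : (fun z => c * f z) = (fun z => - ((- c) * f z)).
    by apply/funext => z; rewrite mulNr opprK.
  by rewrite expectN W ?oppr_ge0 ?ltW // mulNr opprK.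
have hcf : forall z, `|c * f z| <= c * M.
  by move=> z; rewrite normrM ger0_norm // ler_wpM2l.
have hf' : forall z, 0 <= f z + M <= M + M.
  by move=> z; have := hf z; rewrite ler_norml => /andP[a b]; lra.
rewrite (expect_ES hf) (expect_ES hcf).
have -> : (fun z => c * f z + c * M) = (fun z => c * (f z + M)).
  by apply/funext => z; rewrite mulrDr.
by rewrite (ESZ _ c0 hf') mulrBr.
Qed.

Lemma expect0 : expect D (fun=> 0) = 0.
Proof.
have h0 : forall z : qd_pair T, `|(fun=> (0:R)) z| <= 0 by move=> z; rewrite normr0.
rewrite (expect_ES h0); under [X in ES X]funext do rewrite addr0.
by rewrite ES_cst // subr0.
Qed.

Lemma bnd_sum {I : Type} (r : seq I) (F : I -> qd_pair T -> R) :
  (forall i, exists M, forall z, `|F i z| <= M) ->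
  exists M, forall z, `|\sum_(i <- r) F i z| <= M.
Proof.
move=> hF; elim: r => [|i r [M hM]].
  by exists 0 => z; rewrite big_nil normr0.
have [N hN] := hF i; exists (N + M) => z; rewrite big_cons.
by apply: le_trans (ler_normD _ _) _; rewrite lerD.
Qed.

Lemma expect_sum {I : Type} (r : seq I) (F : I -> qd_pair T -> R) :
  (forall i, exists M, forall z, `|F i z| <= M) ->
  expect D (fun z => \sum_(i <- r) F i z) = \sum_(i <- r) expect D (F i).
Proof.
move=> hF; elim: r => [|i r IH].
  by under [X in expect D X]funext do rewrite big_nil; rewrite big_nil expect0.
under [X in expect D X]funext do rewrite big_cons.
have [N hN] := hF i; have [M hM] := bnd_sum r _ hF.
by rewrite (expectD hN hM) IH big_cons.
Qed.

End Expect.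
Section Prob.
Context {R : realType}.
Context {T : nat} {D : qd_pair T -> R}.
Hypothesis hD : is_distribution D.
Local Notation S := [set: qd_pair T].
Local Open Scope ereal_scope.

Lemma prod_ge0 n (s : n.-tuple (qd_pair T)) : (0 <= \prod_(i < n) D (tnth s i))%R.
Proof. by apply: prodr_ge0 => i _; exact: D_ge0. Qed.

Lemma prob_ge0 n (P : n.-tuple (qd_pair T) -> Prop) : 0 <= prob_iid D P.
Proof. by apply: esum_ge0 => s _; rewrite lee_fin prod_ge0. Qed.

Lemma prob_mono n (P Q : n.-tuple (qd_pair T) -> Prop) :
  (forall s, P s -> Q s) -> prob_iid D P <= prob_iid D Q.
Proof.
move=> PQ; rewrite /prob_iid (esum_mkcond [set s | P s]) (esum_mkcond [set s | Q s]).
apply: le_esum => s _; case: ifPn => hP; rewrite ?inE /= in hP.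
  by rewrite ifT ?inE //=; exact: PQ.
by case: ifPn => _; rewrite ?lee_fin ?prod_ge0.
Qed.

Lemma prob0T (P : 0.-tuple (qd_pair T) -> Prop) : P [tuple] -> prob_iid D P = 1.
Proof.
move=> hP; rewrite /prob_iid.
have -> : [set s : 0.-tuple (qd_pair T) | P s] = [set [tuple]].
  apply/seteqP; split => s /=; first by rewrite (tuple0 s).
  by move=> ->.
by rewrite esum_set1 ?big_ord0 // lee_fin big_ord0.
Qed.

Lemma prob0F (P : 0.-tuple (qd_pair T) -> Prop) : ~ P [tuple] -> prob_iid D P = 0.
Proof.
move=> hP; rewrite /prob_iid.
have -> : [set s : 0.-tuple (qd_pair T) | P s] = set0.
  by apply/seteqP; split => s //=; rewrite (tuple0 s).
by rewrite esum_set0.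
Qed.

Lemma probS n (P : n.+1.-tuple (qd_pair T) -> Prop) :
  prob_iid D P =
  \esum_(z in S) ((D z)%:E * prob_iid D (fun s : n.-tuple _ => P [tuple of z :: s])).
Proof.
rewrite /prob_iid.
pose J := fun z => [set s : n.-tuple (qd_pair T) | P [tuple of z :: s]].
pose e := fun k : qd_pair T * n.-tuple (qd_pair T) => [tuple of k.1 :: k.2].
rewrite (reindex_esum (S `*`` J) _ e); last first.
  split.
  - by move=> [z s] [_ /=]; rewrite /J /=.
  - move=> [z s] [z' s'] _ _ /(congr1 val) /= [-> hs].
    by congr pair; apply: val_inj.
  - move=> s /= hs; exists (thead s, behead_tuple s) => //=.
      by split => //; rewrite /J /= -tuple_eta.
    by rewrite /e /= -tuple_eta.
under eq_esum => k _ do rewrite /e big_ord_recl tnth0.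
rewrite -(esum_esum (a := fun (z : qd_pair T) (s : n.-tuple (qd_pair T)) => (D z * \prod_(i < n) D (tnth [tuple of z :: s] (lift ord0 i)))%:E)) /=; last first.
  by move=> z s _ _; rewrite lee_fin mulr_ge0 ?D_ge0 ?prodr_ge0 // => i _; exact: D_ge0.
apply: eq_esum => z _; rewrite -esumZl ?lee_fin ?D_ge0 //; last by move=> s; rewrite lee_fin prod_ge0.
apply: eq_esum => s _; rewrite EFinM; congr (_ * _)%:E.
by apply: eq_bigr => i _; rewrite tnthS.
Qed.

Lemma probT n : prob_iid D (fun _ : n.-tuple (qd_pair T) => True) = 1.
Proof.
elim: n => [|n IH]; first exact: prob0T.
rewrite probS; under eq_esum do rewrite IH mule1.
exact: esumD1.
Qed.

Lemma prob_compl n (P : n.-tuple (qd_pair T) -> Prop) :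
  prob_iid D P + prob_iid D (fun s => ~ P s) = 1.
Proof.
rewrite -(probT n) /prob_iid [RHS](esumID [set s | P s]); last first.
  by move=> s _; rewrite lee_fin prod_ge0.
by congr (_ + _); congr esum; apply/seteqP; split => s /= //; case.
Qed.

End Prob.
Section LinAlg.
Context {R : realType}.
Variable T : nat.
Implicit Types (V : 'M[R]_T) (x u : 'rV[R]_T).

Definition spanl (s : seq 'rV[R]_T) : 'M[R]_T := (\sum_(x <- s) <<x>>)%MS.

Lemma rank_adds_row V x : \rank (V + x)%MS = (\rank V + ~~ (x <= V)%MS)%N.
Proof.
case: (boolP (x <= V)%MS) => hx /=.
  by rewrite (addsmx_idPl hx) addn0.
have x0 : x != 0 by apply: contraNneq hx => ->; rewrite sub0mx.
rewrite mxrank_disjoint_sum ?rank_rV ?x0 //.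
apply/eqP; rewrite -mxrank_eq0.
have hle : (\rank (V :&: x)%MS <= \rank x)%N := mxrankS (capmxSr V x).
rewrite rank_rV x0 /= in hle.
case: (\rank (V :&: x)%MS) (mxrank_leqif_sup (capmxSr V x)) hle => [//|[|//]] h _.
have := h.2; rewrite rank_rV x0 /= => /esym /(elimT idP).
by rewrite sub_capmx (negPf hx).
Qed.

Lemma rank_span_cons V x s :
  \rank (V + spanl (x :: s))%MS = \rank ((V + x)%MS + spanl s)%MS.
Proof.
rewrite /spanl big_cons addsmxA.
by apply/eqmx_rank/eqmxP; apply: adds_eqmx => //; apply: adds_eqmx => //; exact: genmxE.
Qed.

Lemma orth_dot {p} {V : 'M[R]_(p, T)} {u y} : (V <= kermx u^T)%MS -> (y <= V)%MS -> dotv y u = 0.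
Proof.
move=> hV hy; have := submx_trans hy hV; rewrite sub_kermx => /eqP h.
by rewrite dotv_mx h mxE.
Qed.

Lemma orth_family r V : (\rank V + r)%N = T ->
  exists us : seq 'rV[R]_T, [/\ size us = r, all (fun u => u != 0) us,
    (forall u, u \in us -> (V <= kermx u^T)%MS) &
    pairwise (fun u v => dotv u v == 0) us].
Proof.
elim: r V => [|r IH] V hr.
  by exists [::].
have hK : kermx V^T != 0.
  by rewrite -mxrank_eq0 mxrank_ker mxrank_tr; apply/eqP; lia.
set u := nz_row (kermx V^T).
have u0 : u != 0 by rewrite nz_row_eq0.
have huV : (V <= kermx u^T)%MS.
  have := nz_row_sub (kermx V^T); rewrite -/u sub_kermx => /eqP h.
  by rewrite sub_kermx -(trmxK V) -trmx_mul h trmx0.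
have hnu : ~~ (u <= V)%MS.
  apply/negP => h; move: u0; rewrite -(@dotv_eq0 _ _ u) ?eqxx //.
  exact: orth_dot huV h.
have [us [h1 h2 h3 h4]] := IH (V + u)%MS ltac:(rewrite rank_adds_row hnu; lia).
exists (u :: us); split => /=.
- by rewrite h1.
- by rewrite u0 h2.
- move=> v; rewrite inE => /orP [/eqP -> //|hv].
  by have := h3 v hv; rewrite addsmx_sub => /andP[].
- rewrite h4 andbT; apply/allP => v hv; have := h3 v hv.
  rewrite addsmx_sub => /andP[_ h]; apply/eqP.
  exact: (orth_dot h (submx_refl u)).
Qed.

Lemma bessel (us : seq 'rV[R]_T) x : all (fun u => u != 0) us ->
  pairwise (fun u v => dotv u v == 0) us ->
  \sum_(u <- us) dotv u x ^+ 2 / dotv u u <= dotv x x.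
Proof.
elim: us x => [|u us IH] x /=; first by rewrite big_nil dotv_ge0.
move=> /andP[u0 h0] /andP[hu hp]; rewrite big_cons.
have uu : dotv u u != 0 by apply: contra u0 => /eqP /dotv_eq0 ->.
set c := dotv u x / dotv u u.
set y := x - c *: u.
have hy : \sum_(v <- us) dotv v x ^+ 2 / dotv v v =
          \sum_(v <- us) dotv v y ^+ 2 / dotv v v.
  apply: eq_big_seq => v hv; have /eqP := allP hu v hv.
  by rewrite /y dotvBr dotvZr dotvC => ->; rewrite mulr0 subr0.
rewrite hy; apply: le_trans (lerD (lexx _) (IH y h0 hp)) _.
rewrite /y !dotvBl !dotvBr !dotvZl !dotvZr (dotvC x u).
rewrite le_eqVlt; apply/orP; left; apply/eqP; rewrite /c; field; exact: uu.
Qed.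

Lemma span_sub (xs : seq 'rV[R]_T) (K : 'M[R]_T) :
  (forall x, x \in xs -> (x <= K)%MS) -> (spanl xs <= K)%MS.
Proof.
rewrite /spanl; elim: xs => [|x xs IH] h; first by rewrite big_nil sub0mx.
rewrite big_cons addsmx_sub genmxE h ?mem_head //=.
by apply: IH => y hy; apply: h; rewrite inE hy orbT.
Qed.

Lemma span_unique (xs : seq 'rV[R]_T) (w w' : 'rV[R]_T) :
  \rank (spanl xs) = T -> (forall x, x \in xs -> dotv w x = dotv w' x) -> w = w'.
Proof.
move=> hr hx; apply/eqP; rewrite -subr_eq0; apply/eqP.
set d := w - w'.
have : (spanl xs <= kermx d^T)%MS.
  apply: span_sub => x hx'; rewrite sub_kermx; apply/eqP/rowP => i.
  rewrite ord1 -dotv_mx dotvC /d dotvBl hx // subrr mxE //.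
have : row_full (spanl xs) by rewrite /row_full hr.
rewrite -sub1mx => h1 h2; have := submx_trans h1 h2; rewrite sub_kermx mul1mx.
by move=> /eqP /(congr1 trmx); rewrite trmxK trmx0.
Qed.

End LinAlg.
Section Rayleigh.
Context {R : realType}.
Variable T : nat.
Local Notation V := ('rV[R^o]_T).

Lemma contM (f g : V -> R^o) : continuous f -> continuous g ->
  continuous (fun u => f u * g u).
Proof. by move=> hf hg x; exact: (continuousM (hf x) (hg x)). Qed.

Lemma contD (f g : V -> R^o) : continuous f -> continuous g ->
  continuous (fun u => f u + g u).
Proof. by move=> hf hg x; exact: (continuousD (hf x) (hg x)). Qed.

Lemma cont_sum (I : Type) (r : seq I) (f : I -> V -> R^o) :
  (forall i, continuous (f i)) -> continuous (fun u => \sum_(i <- r) f i u).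
Proof.
move=> hf; elim: r => [|i r IH].
  by under [X in continuous X]funext do rewrite big_nil; exact: cst_continuous.
under [X in continuous X]funext do rewrite big_cons.
exact: contD.
Qed.

Lemma cont_coord i : continuous (fun u : V => u ord0 i).
Proof. exact: coord_continuous. Qed.

Lemma cont_quad (M : 'M[R]_T) : continuous (fun u : V => dotv (u *m M) u : R^o).
Proof.
rewrite /dotv; under [X in continuous X]funext do under eq_bigr do rewrite mxE.
apply: cont_sum => k; apply: contM; last exact: cont_coord.
by apply: cont_sum => j; apply: contM; [exact: cont_coord | exact: cst_continuous].
Qed.

Lemma cont_dot : continuous (fun u : V => dotv u u : R^o).
Proof. by apply: cont_sum => k; apply: contM; exact: cont_coord. Qed.

Lemma coord_sq_le (u : 'rV[R]_T) j : u 0 j * u 0 j <= dotv u u.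
Proof.
rewrite /dotv (bigD1 j) //= lerDl; apply: sumr_ge0 => k _.
by rewrite -expr2 sqr_ge0.
Qed.

Lemma exists_min (M : 'M[R]_T) : (0 < T)%N ->
  exists c : 'rV[R]_T, dotv c c = 1 /\
    forall v : 'rV[R]_T, dotv v v = 1 -> dotv (c *m M) c <= dotv (v *m M) v.
Proof.
move=> hT.
pose A := [set u : V | (dotv u u : R^o) = 1].
have A0 : A !=set0.
  exists (\row_(j < T) ((j == Ordinal hT)%:R : R^o)); rewrite /A /= /dotv.
  rewrite (bigD1 (Ordinal hT)) //= big1 ?mxE ?eqxx ?mulr1 ?addr0 //.
  by move=> k hk; rewrite mxE (negPf hk) mulr0.
have cA : compact A.
  apply: bounded_closed_compact.
    apply: filterS (nbhs_pinfty_ge (num_real 1)) => Mb hMb u hu.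
    apply: le_trans hMb; rewrite [leLHS]/Num.norm /= mx_normrE.
    apply: bigmax_le => // -[i j] _ /=; rewrite ord1.
    have := coord_sq_le u j; rewrite hu => h.
    by rewrite ler_norml; apply/andP; split; nra.
  have -> : A = (fun u : V => (dotv u u : R^o)) @^-1` [set x | x = 1] by [].
  apply: closed_comp => [x _|]; first exact: cont_dot.
  exact: closed_eq.
have [c hc hmin] := compact_EVT_min A0 cA (continuous_subspaceT (cont_quad M)).
exists c; split; first by move: hc; rewrite inE.
by move=> v hv; apply: hmin; rewrite inE.
Qed.

Lemma quad_zero (a b : R) : (forall t, 0 <= t * a + t ^+ 2 * b) -> a = 0.
Proof.
move=> h; set k := `|b| + 1.
have k0 : 0 < k by rewrite /k ltr_pwDr // normr_ge0.
have hb : b <= `|b| := ler_norm b.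
have := h (- a / k).
have -> : - a / k * a + (- a / k) ^+ 2 * b = (a * a) * (b - k) / (k * k).
  by field; rewrite gt_eqF.
rewrite pmulr_lge0 ?invr_gt0 ?mulr_gt0 // => h2.
have : a * a <= 0 by rewrite /k in h2; nra.
by move=> h3; apply/eqP; rewrite -sqrf_eq0 expr2 eq_le h3 -expr2 sqr_ge0.
Qed.

Variable M : 'M[R]_T.
Hypothesis hsym : M^T = M.

Lemma dot_sym_quad (a b : 'rV[R]_T) : dotv (a *m M) b = dotv (b *m M) a.
Proof.
rewrite !dotv_mx.
have -> : a *m M *m b^T = (b *m M *m a^T)^T by rewrite !trmx_mul trmxK hsym mulmxA.
by rewrite mxE.
Qed.

Lemma quadZ (a : R) (v : 'rV[R]_T) : dotv ((a *: v) *m M) (a *: v) = a * a * dotv (v *m M) v.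
Proof. by rewrite -scalemxAl dotvZl dotvZr mulrA. Qed.

Lemma rayleigh : (0 < T)%N -> forall u : 'rV[R]_T, lambda_min M * dotv u u <= dotv (u *m M) u.
Proof.
move=> hT; have [c [hc hmin]] := exists_min M hT.
set mu := dotv (c *m M) c.
have qlb : forall v : 'rV[R]_T, mu * dotv v v <= dotv (v *m M) v.
  move=> v; case: (eqVneq v 0) => [->|v0].
    by rewrite dotv0l mul0mx dotv0l mulr0.
  have d0 : 0 < dotv v v.
    by rewrite lt_def dotv_ge0 andbT; apply: contra v0 => /eqP /dotv_eq0 ->.
  set s := Num.sqrt (dotv v v).
  have s0 : 0 < s by rewrite sqrtr_gt0.
  have ss : s * s = dotv v v by rewrite -expr2 sqr_sqrtr // ltW.
  have := hmin (s^-1 *: v); rewrite quadZ dotvZl dotvZr mulrA -ss.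
  have -> : s^-1 * s^-1 * (s * s) = 1 by field; rewrite gt_eqF.
  move=> /(_ erefl) h.
  have e : mu * (s * s) <= s^-1 * s^-1 * dotv (v *m M) v * (s * s).
    by rewrite ler_pM2r ?mulr_gt0.
  by apply: le_trans e _; rewrite le_eqVlt; apply/orP; left; apply/eqP; field; rewrite gt_eqF.
have var : forall w : 'rV[R]_T, dotv (w *m M) c = mu * dotv w c.
  move=> w; apply/eqP; rewrite -subr_eq0; apply/eqP.
  suff : 2 * (dotv (w *m M) c - mu * dotv w c) = 0.
    by move=> /eqP; rewrite mulf_eq0 pnatr_eq0 /= => /eqP.
  apply: (@quad_zero _ (dotv (w *m M) w - mu * dotv w w)) => t.
  have := qlb (c + t *: w).
  rewrite mulmxDl -scalemxAl !dotvDl !dotvDr !dotvZl !dotvZr hc -/mu.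
  rewrite (dot_sym_quad c w) (dotvC c w) => h.
  rewrite expr2; nra.
have eig : c *m M = mu *: c.
  apply/eqP; rewrite -subr_eq0; apply/eqP; apply: dotv_eq0.
  rewrite dotvBl dotvZl (dot_sym_quad c) var !(dotvC c).
  by rewrite subrr.
have hlb : lbound [set a | eigenvalue M a] mu.
  move=> a /eigenvalueP [v hv v0].
  have d0 : 0 < dotv v v.
    by rewrite lt_def dotv_ge0 andbT; apply: contra v0 => /eqP /dotv_eq0 ->.
  by have := qlb v; rewrite hv dotvZl ler_pM2r.
have hle : lambda_min M <= mu.
  apply: ge_inf; first by exists mu.
  apply/eigenvalueP; exists c => //; apply/eqP => c0.
  by move: hc; rewrite c0 dotv0l => /eqP; rewrite eq_sym oner_eq0.
move=> u; apply: le_trans (qlb u); apply: ler_wpM2r => //; exact: dotv_ge0.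
Qed.

End Rayleigh.
Section Key.
Context {R : realType}.
Variables (T m : nat) (Eq Ed : seq 'I_T -> nat -> 'rV[R]_m) (D : qd_pair T -> R).
Hypotheses (hEq : unit_encoder Eq) (hEd : unit_encoder Ed) (hD : is_distribution D).
Hypothesis hsupp : forall z : qd_pair T, D z != 0 ->
        [&& (0 < size z.1)%N, (0 < size z.2)%N & uniq z.1].
Hypothesis hT : (0 < T)%N.

Local Notation xf := (feature Eq Ed).
Local Notation A := (second_moment Eq Ed D).

Lemma A_sym : A^T = A.
Proof.
apply/matrixP => i j; rewrite !mxE; congr expect; apply/funext => z.
by rewrite mulrC [in RHS]mulrC (mulrC (xf z 0 i)).
Qed.

Lemma inv_len_bound (n : nat) : 0 <= (n%:R : R)^-1 <= 1.
Proof.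
case: n => [|n]; first by rewrite invr0 lexx ler01.
by rewrite invr_ge0 ler0n /= invf_le1 ?ltr0Sn // ler1n.
Qed.

Lemma sq_expand (l : R) (u v : 'rV[R]_T) :
  l * dotv u v ^+ 2 = \sum_(k < T) \sum_(j < T) u 0 j * u 0 k * (l * (v 0 j * v 0 k)).
Proof.
rewrite /dotv expr2 mulr_suml mulr_sumr; apply: eq_bigr => k _.
rewrite mulr_sumr mulr_sumr; apply: eq_bigr => j _; ring.
Qed.

Definition G (u : 'rV[R]_T) (z : qd_pair T) : R := (size z.1)%:R^-1 * dotv u (xf z) ^+ 2.

Lemma dot_feat_bound (u : 'rV[R]_T) z : `|dotv u (xf z)| <= \sum_j `|u 0 j|.
Proof.
apply: le_trans (ler_norm_sum _ _ _) _; apply: ler_sum => j _.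
rewrite (normrM (u 0 j) (xf z 0 j)) ler_piMr //; exact: feature_bound.
Qed.

Lemma G_bound u z : 0 <= G u z <= (\sum_j `|u 0 j|) ^+ 2.
Proof.
have /andP[l0 l1] := inv_len_bound (size z.1).
have e : dotv u (xf z) ^+ 2 = `|dotv u (xf z)| ^+ 2.
  by rewrite -normrX ger0_norm // sqr_ge0.
apply/andP; split; first by rewrite mulr_ge0 // sqr_ge0.
rewrite /G e; apply: le_trans (ler_piMl _ l1) _; first by rewrite exprn_ge0.
rewrite !expr2; apply: ler_pM => //; exact: dot_feat_bound.
Qed.

Lemma quad_expect u : dotv (u *m A) u = expect D (G u).
Proof.
have hb : forall j k, exists M, forall z,
    `|u 0 j * u 0 k * ((size z.1)%:R^-1 * (xf z 0 j * xf z 0 k))| <= M.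
  move=> j k; exists (`|u 0 j * u 0 k|) => z.
  rewrite normrM ler_piMr //.
  have /andP[l0 l1] := inv_len_bound (size z.1).
  rewrite (normrM (size z.1)%:R^-1) (ger0_norm l0).
  have e : `|xf z 0 j * xf z 0 k| <= 1.
    rewrite (normrM (xf z 0 j) (xf z 0 k)).
    by apply: mulr_ile1 => //; exact: feature_bound.
  by apply: mulr_ile1.
have -> : G u = (fun z => \sum_(k < T) \sum_(j < T)
      u 0 j * u 0 k * ((size z.1)%:R^-1 * (xf z 0 j * xf z 0 k))).
  by apply/funext => z; rewrite /G sq_expand.
rewrite (expect_sum hD); last first.
  move=> k; apply: bnd_sum => j; exact: hb.
rewrite /dotv; apply: eq_bigr => k _.
rewrite (expect_sum hD); last exact: (hb ^~ k).
rewrite mxE mulr_suml; apply: eq_bigr => j _.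
have hf : forall z, `|(size z.1)%:R^-1 * (xf z 0 j * xf z 0 k)| <= 1.
  move=> z; have /andP[l0 l1] := inv_len_bound (size z.1).
  rewrite (normrM (size z.1)%:R^-1) (ger0_norm l0).
  have e : `|xf z 0 j * xf z 0 k| <= 1.
    rewrite (normrM (xf z 0 j) (xf z 0 k)).
    by apply: mulr_ile1 => //; exact: feature_bound.
  by apply: mulr_ile1.
rewrite (expectZ hD (u 0 j * u 0 k) hf) mxE; ring.
Qed.

Lemma sum_const_seq (I : Type) (s : seq I) (c : R) : \sum_(i <- s) c = (size s)%:R * c.
Proof.
elim: s => [|a s IH]; first by rewrite big_nil mul0r.
by rewrite big_cons IH /= -addn1 natrD mulrDl mul1r addrC.
Qed.

Lemma key (V : 'M[R]_T) :
  ((((T - \rank V)%N)%:R * lambda_min A)%:E <=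
    \esum_(z in [set: qd_pair T]) (D z * (~~ (xf z <= V)%MS)%:R)%:E)%E.
Proof.
set r := (T - \rank V)%N.
have hr : (\rank V + r)%N = T by have := rank_leq_col V; rewrite /r; lia.
have [us [hs h0 horth hpw]] := orth_family T r V hr.
pose g u z := (dotv u u)^-1 * G u z.
have uu0 : forall u, u \in us -> 0 < dotv u u.
  move=> u hu; have := allP h0 u hu => u0.
  by rewrite lt_def dotv_ge0 andbT; apply: contra u0 => /eqP /dotv_eq0 ->.
have gb : forall u, u \in us -> forall z, 0 <= g u z <= (dotv u u)^-1 * (\sum_j `|u 0 j|) ^+ 2.
  move=> u hu z; have /andP[a b] := G_bound u z.
  have ui : 0 <= (dotv u u)^-1 by rewrite invr_ge0 ltW // uu0.
  by rewrite mulr_ge0 // ler_wpM2l.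
have hpt : forall z, D z * (\sum_(u <- us) g u z) <= D z * (~~ (xf z <= V)%MS)%:R.
  move=> z; case: (eqVneq (D z) 0) => [->|Dz]; first by rewrite !mul0r.
  apply: ler_wpM2l; first exact: D_ge0 hD z.
  have /and3P [l0 _ hu] := hsupp z Dz.
  case: (boolP (xf z <= V)%MS) => hx /=.
    rewrite big_seq big1 // => u hu'.
    by rewrite /g /G (dotvC u) (orth_dot T (horth u hu') hx) expr0n /= !mulr0.
  have le0 : 0 < (size z.1)%:R :> R by rewrite ltr0n.
  apply: (@le_trans _ _ ((size z.1)%:R^-1 * dotv (xf z) (xf z))); last first.
    apply: (@le_trans _ _ ((size z.1)%:R^-1 * (size z.1)%:R)).
      by apply: ler_wpM2l; [rewrite invr_ge0 ltW | exact: feature_sq].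
    by rewrite mulVf // lt0r_neq0.
  apply: (@le_trans _ _ ((size z.1)%:R^-1 * \sum_(u <- us) dotv u (xf z) ^+ 2 / dotv u u)).
    rewrite mulr_sumr; apply: ler_sum => u _; rewrite /g /G.
    by rewrite le_eqVlt; apply/orP; left; apply/eqP; ring.
  apply: ler_wpM2l; [by rewrite invr_ge0 ltW | exact: (bessel T _ (xf z) h0 hpw)].
have gnn : forall u z, 0 <= g u z.
  by move=> u z; rewrite /g mulr_ge0 ?invr_ge0 ?dotv_ge0 //; case/andP: (G_bound u z).
apply: (@le_trans _ _ (\esum_(z in [set: qd_pair T]) (D z * \sum_(u <- us) g u z)%:E)); last first.
  by apply: le_esum => z _; rewrite lee_fin hpt.
have e1 : (\esum_(z in [set: qd_pair T]) (D z * \sum_(u <- us) g u z)%:E =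
    \sum_(u <- us) \esum_(z in [set: qd_pair T]) (D z * g u z)%:E)%E.
  rewrite -esum_sum; last by move=> z u _ _; rewrite lee_fin mulr_ge0 ?gnn // (D_ge0 hD).
  by apply: eq_esum => z _; rewrite mulr_sumr sumEFin.
rewrite e1.
have e2 : forall u, u \in us -> (\esum_(z in [set: qd_pair T]) (D z * g u z)%:E =
    ((dotv u u)^-1 * dotv (u *m A) u)%:E)%E.
  move=> u hu; rewrite -(ESE hD (gb u hu)) -(expect_nonneg hD (gb u hu)).
  congr (_%:E); rewrite /g quad_expect.
  apply: (expectZ hD _ (M := (\sum_j `|u 0 j|) ^+ 2)) => z.
  by have /andP[a b] := G_bound u z; rewrite ger0_norm.
apply: (@le_trans _ _ (\sum_(u <- us) (lambda_min A)%:E)%E).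
  by rewrite sumEFin sum_const_seq hs.
rewrite big_seq_cond [X in (_ <= X)%E]big_seq_cond; apply: lee_sum => u /andP[hu _].
rewrite e2 // lee_fin -(ler_pM2l (uu0 u hu)) mulrA mulfV ?mul1r; last exact: lt0r_neq0 (uu0 u hu).
by rewrite mulrC; exact: rayleigh A_sym hT u.
Qed.

Lemma lam_le1 : lambda_min A <= 1.
Proof.
have := key 0; rewrite mxrank0 subn0.
have hb : forall z, 0 <= ((~~ (xf z <= (0 : 'M[R]_T))%MS)%:R : R) <= 1.
  by move=> z; case: (~~ _); rewrite ?lexx ?ler01.
rewrite -(ESE hD hb) lee_fin => h.
have h1 : @ES R T D (fun z => ((~~ (xf z <= (0 : 'M[R]_T))%MS)%:R : R)) <= 1.
  rewrite -[leRHS](ES_cst hD 1 ler01).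
  by apply: (ES_le hD (M := 1)) => z //; have := hb z.
have hT1 : 1 <= T%:R :> R by rewrite ler1n.
have := le_trans h h1 => h2.
case: (leP (lambda_min A) 0) => hl; first by apply: le_trans hl ler01.
by apply: le_trans h2; rewrite ler_peMl // ltW.
Qed.

Lemma fail_bound n (V : 'M[R]_T) :
  (prob_iid D (fun s : n.-tuple (qd_pair T) => (\rank (V + spanl T (map xf s))%MS < T)%N)
    <= ((((T - \rank V)%N)%:R * (1 - lambda_min A) ^+ n)%:E))%E.
Proof.
set lam := lambda_min A.
have q0 : 0 <= 1 - lam by rewrite subr_ge0 lam_le1.
elim: n V => [|n IH] V.
  case: (ltnP (\rank V) T) => hV.
    have h1 := prob_mono hD 0 (fun s : 0.-tuple (qd_pair T) => (\rank (V + spanl T (map xf s))%MS < T)%N)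
      (fun _ => True) (fun _ _ => I).
    apply: le_trans h1 _.
    rewrite (probT hD) expr0 mulr1 lee_fin ler1n; lia.
  rewrite prob0F; first by rewrite lee_fin mulr_ge0 // exprn_ge0.
  by rewrite /= /spanl big_nil addsmx0 ltnNge hV.
rewrite (probS hD).
set r := (T - \rank V)%N.
pose b z : R := (~~ (xf z <= V)%MS)%:R.
have hbr : forall z, b z <= r%:R.
  move=> z; rewrite /b; case: (boolP (xf z <= V)%MS) => hx /=; first by rewrite ler0n.
  have := rank_leq_col (V + xf z)%MS; rewrite rank_adds_row hx /= => h.
  by rewrite ler1n /r; lia.
have hb01 : forall z, 0 <= b z <= 1 by move=> z; rewrite /b; case: (~~ _); rewrite ?lexx ?ler01.
have hstep : forall z, (prob_iid D (fun s : n.-tuple (qd_pair T) =>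
      (\rank (V + spanl T (map xf [tuple of z :: s]))%MS < T)%N)
      <= ((r%:R - b z) * (1 - lam) ^+ n)%:E)%E.
  move=> z.
  apply: le_trans (prob_mono hD n _ (fun s => (\rank ((V + xf z)%MS + spanl T (map xf s))%MS < T)%N) _) _.
    by move=> s; rewrite /= rank_span_cons.
  apply: le_trans (IH (V + xf z)%MS) _.
  suff -> : ((T - \rank (V + xf z)%MS)%N)%:R = r%:R - b z :> R by [].
  rewrite rank_adds_row /r /b; case: (boolP (xf z <= V)%MS) => hx /=.
    by rewrite addn0 subr0.
  have := rank_leq_col (V + xf z)%MS; rewrite rank_adds_row hx /= => h.
  rewrite subnDA natrB //; lia.
apply: (@le_trans _ _ (\esum_(z in [set: qd_pair T]) (D z * ((r%:R - b z) * (1 - lam) ^+ n))%:E)%E).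
  apply: le_esum => z _; rewrite EFinM; apply: lee_wpmul2l; first by rewrite lee_fin (D_ge0 hD).
  exact: hstep z.
set qn := (1 - lam) ^+ n.
have qn0 : 0 <= qn by rewrite exprn_ge0.
have hf1 : forall z, 0 <= (r%:R - b z) * qn <= r%:R * qn.
  move=> z; have := hbr z; have /andP[b0 b1] := hb01 z => h.
  by rewrite mulr_ge0 ?subr_ge0 // ler_wpM2r // lerBlDr lerDl.
have hf2 : forall z, 0 <= qn * b z <= qn * 1.
  by move=> z; have /andP[b0 b1] := hb01 z; rewrite mulr_ge0 // ler_wpM2l.
rewrite -(ESE hD hf1) lee_fin.
have e1 := ESD hD hf1 hf2.
have E : (fun z => (r%:R - b z) * qn + qn * b z) = (fun=> r%:R * qn).
  by apply/funext => z; ring.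
rewrite E (ES_cst hD) ?mulr_ge0 // in e1.
have e2 := ESZ hD qn qn0 hb01.
have := key V; rewrite -(ESE hD hb01) lee_fin -/r -/lam => hk.
have hk' : qn * (r%:R * lam) <= qn * @ES R T D b by rewrite ler_wpM2l.
move: e1 e2 hk'; rewrite exprS -/qn => e1 e2 hk'.
rewrite /b in e2 hk' e1 *.
nra.
Qed.

End Key.
Definition alg_def {R : realType} (T : nat) (l : seq ('rV[R]_T * R)) : 'rV[R]_T :=
  xget 0 [set w | forall w', (forall p, p \in l -> dotv w' p.1 = p.2) <-> w' = w].

Lemma numeric_bound {R : realType} {T n : nat} {lam delta : R} :
  (0 < T)%N -> 0 < lam -> lam <= 1 -> 0 < delta < 1 ->
  1 / lam * ln (T%:R / delta) <= n%:R ->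
  T%:R * (1 - lam) ^+ n <= delta.
Proof.
move=> hT l0 l1 /andP[d0 d1] hn.
have T0 : 0 < T%:R :> R by rewrite ltr0n.
have Td : 0 < T%:R / delta by rewrite divr_gt0.
have h1 : (1 - lam) ^+ n <= expR (- lam) ^+ n.
  by rewrite lerXn2r ?nnegrE ?subr_ge0 ?expR_ge0 //; exact: expR_ge1Dx.
have h2 : expR (- lam) ^+ n = expR (- (lam * n%:R)) by rewrite -expRM_natr mulNr.
have h3 : ln (T%:R / delta) <= lam * n%:R.
  have := ler_wpM2l (ltW l0) hn; rewrite mulrA div1r mulfV ?mul1r //; exact: lt0r_neq0.
have h4 : expR (- (lam * n%:R)) <= expR (- ln (T%:R / delta)) by rewrite ler_expR lerN2.
rewrite [X in _ <= X]expRN lnK ?posrE // invf_div in h4.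
rewrite h2 in h1; have h5 := le_trans h1 h4.
have := ler_wpM2l (ltW T0) h5; rewrite mulrCA mulfV ?mulr1 //; exact: lt0r_neq0.
Qed.

Theorem theorem1 (R : realType) :
  exists C : R, 0 < C /\
  exists alg : forall T : nat, seq ('rV[R]_T * R) -> 'rV[R]_T,
  forall (T m : nat) (Eq Ed : seq 'I_T -> nat -> 'rV[R]_m)
         (D : qd_pair T -> R) (wstar : 'rV[R]_T) (delta : R) (n : nat),
    (0 < T)%N ->
    unit_encoder Eq -> unit_encoder Ed ->
    is_distribution D ->
    (forall z : qd_pair T, D z != 0 ->
        [&& (0 < size z.1)%N, (0 < size z.2)%N & uniq z.1]) ->
    0 < lambda_min (second_moment Eq Ed D) ->
    0 < delta < 1 ->
    C / lambda_min (second_moment Eq Ed D) * ln (T%:R / delta) <= n%:R ->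
    ((1 - delta)%:E <=
      prob_iid D (fun s : n.-tuple (qd_pair T) =>
        alg T [seq (feature Eq Ed z, wchamfer wstar (feature Eq Ed z)) | z <- s]
        = wstar))%E.
Proof.
exists 1; split; first exact: ltr01.
exists (@alg_def R).
move=> T m Eq Ed D wstar delta n hT hEq hEd hD hsupp hl hdelta hn.
set lam := lambda_min (second_moment Eq Ed D).
set F := fun s : n.-tuple (qd_pair T) => (\rank ((0%R : 'M[R]_T) + spanl T (map (feature Eq Ed) s))%MS < T)%N.
have hF := @fail_bound R T m Eq Ed D hEq hEd hD hsupp hT n 0.
rewrite mxrank0 subn0 -/lam in hF.
have hnum := numeric_bound hT hl (@lam_le1 R T m Eq Ed D hEq hEd hD hsupp hT) hdelta hn.
have hsucc : forall s : n.-tuple (qd_pair T), ~ F s ->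
    alg_def T [seq (feature Eq Ed z, wchamfer wstar (feature Eq Ed z)) | z <- s] = wstar.
  move=> s hnF.
  have hr : \rank (spanl T (map (feature Eq Ed) s)) = T.
    apply/eqP; rewrite eqn_leq rank_leq_col /=.
    by move/negP: hnF; rewrite /F adds0mx_id -leqNgt.
  set l := [seq _ | z <- s].
  have hP : forall w', (forall p, p \in l -> dotv w' p.1 = p.2) <-> w' = wstar.
    move=> w'; split.
      move=> h; apply: (span_unique T (map (feature Eq Ed) s) w' wstar hr).
      move=> x /mapP [z hz ->].
      by rewrite (h (feature Eq Ed z, wchamfer wstar (feature Eq Ed z))) //; apply/mapP; exists z.
    by move=> -> p /mapP [z hz ->].
  rewrite /alg_def; case: xgetP => [w -> hw | hno]; last by exfalso; exact: (hno wstar hP).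
  by rewrite ((hw wstar).1 ((hP wstar).2 erefl)).
have hmono := prob_mono hD n (fun s => ~ F s) _ hsucc.
have hc := prob_compl hD n F.
apply: le_trans hmono.
have fin : forall (x : \bar R) c, (0 <= x)%E -> (x <= c%:E)%E -> exists a : R, x = a%:E.
  by move=> [r| |] c //= _ _; exists r.
have hF0 := prob_ge0 hD n F.
have hN0 := prob_ge0 hD n (fun s => ~ F s).
have [a ea] := fin _ _ hF0 (le_trans hF (lexx _)).
have hN1 : (prob_iid D (fun s => ~ F s) <= 1%E)%E.
  by rewrite -hc ea; apply: leeDr; rewrite -ea.
have [b eb] := fin _ _ hN0 hN1.
rewrite ea eb -EFinD in hc; have hc2 : a + b = 1 := EFin_inj hc.
rewrite eb lee_fin.
move: hF; rewrite ea lee_fin => hF.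
have := le_trans hF hnum; clear -hc2; lra.
Qed.
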